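(* Let $(M,I,J,K)$ be a hypercomplex manifold of complex dimension $2n$ (with respect to $I$), and let $\alpha$ be a nonnegative real $(1,1)$-form on $M$. Then \[ \big(\alpha-\alpha(\cdot J,\cdot J)\big)^{2n}\ \ge\ \alpha^{2n} \] as top-degree forms (i.e. the difference is a nonnegative multiple of the volume form for the orientation induced by $I$).
   Context: A hypercomplex manifold $(M,I,J,K)$ is a manifold with three integrable complex structures satisfying $IJK=-\mathrm{id}_{TM}$; endomorphisms act on tangent vectors from the right (written $XJ$). Types $(p,q)$ are with respect to $I$. A real $(1,1)$-form $\alpha$ is nonnegative if $\alpha(Z,\bar Z)\ge0$ in the usual sense of positivity of real $(1,1)$-forms (equivalently $-\sqrt{-1}\,\alpha(Z,\bar Z)\ge 0$ under the standard convention, i.e. $\alpha$ is a semipositive $(1,1)$-form) for all $(1,0)$-vectors $Z$. The form $\alpha(\cdot J,\cdot J)$ denotes $(X,Y)\mapsto\alpha(XJ,YJ)$. *)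

(* Defs.v *)
(* Pointwise (linear-algebra) model of a hypercomplex
   manifold: one tangent space R^(4n), tangent vectors are row vectors,
   endomorphisms act on the right (X J = X *m J). *)
From mathcomp Require Import all_boot all_order all_algebra.
From mathcomp Require Import perm.
Set Implicit Arguments. Unset Strict Implicit. Unset Printing Implicit Defensive.
Import Order.TTheory GRing.Theory Num.Theory.
Local Open Scope ring_scope.

Section Defs.
Variable R : realFieldType.
Variable m : nat.

Definition bil (A : 'M[R]_m) (X Y : 'rV[R]_m) : R := (X *m A *m Y^T) 0 0.

Definition hypercomplex (I J K : 'M[R]_m) : Prop :=
  [/\ I *m I = - 1%:M, J *m J = - 1%:M, K *m K = - 1%:M
    & I *m J *m K = - 1%:M].

Definition real_2form (A : 'M[R]_m) : Prop := A^T = - A.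

Definition type11 (I A : 'M[R]_m) : Prop :=
  forall X Y : 'rV[R]_m, bil A (X *m I) (Y *m I) = bil A X Y.

(* nonnegativity of a real (1,1)-form: alpha(X, XI) >= 0 for all real X,
   equivalently -sqrt(-1) alpha(Z, Zbar) >= 0 for Z = X - sqrt(-1) XI *)
Definition nonneg11 (I A : 'M[R]_m) : Prop :=
  forall X : 'rV[R]_m, 0 <= bil A X (X *m I).

Definition Jpull (J A : 'M[R]_m) : 'M[R]_m := J *m A *m J^T.

(* k-th wedge power of the 2-form A, evaluated on the ordered 2k-tuple
   (v(0,false), v(0,true), v(1,false), v(1,true), ...):
   alpha^k (v_1,...,v_2k) = 2^-k sum_sigma sgn(sigma)
                             prod_i alpha(v_sigma(2i-1), v_sigma(2i)). *)
Definition wedge_pow (A : 'M[R]_m) (k : nat)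
    (v : 'I_k * bool -> 'rV[R]_m) : R :=
  (2%:R ^- k) * \sum_(s : {perm 'I_k * bool})
     (-1) ^+ odd_perm s * \prod_(i : 'I_k) bil A (v (s (i, false))) (v (s (i, true))).

Definition cframe (I : 'M[R]_m) (k : nat) (e : 'I_k -> 'rV[R]_m)
    (t : 'I_k * bool) : 'rV[R]_m :=
  if t.2 then e t.1 *m I else e t.1.

Definition lin_indep (T : finType) (v : T -> 'rV[R]_m) : Prop :=
  forall c : T -> R, \sum_(t : T) c t *: v t = 0 -> forall t, c t = 0.

End Defs.

(* Main.v *)
From HB Require Import structures.
Require Import Defs.
From mathcomp Require Import all_boot all_order all_algebra.
From mathcomp Require Import perm complex ring.
Set Implicit Arguments. Unset Strict Implicit. Unset Printing Implicit Defensive.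
Import Order.TTheory GRing.Theory Num.Theory.
Local Open Scope ring_scope.

Section Mix.
Variable R : realFieldType.
Variable N : nat.
Local Notation T := ('I_N * bool)%type.

Definition mixv (G : 'I_N -> T -> T -> R) : R :=
  (2%:R ^- N) * \sum_(s : {perm T})
     (-1) ^+ odd_perm s * \prod_(i : 'I_N) G i (s (i, false)) (s (i, true)).

Lemma mix_sum (K : finType) (H : 'I_N -> K -> T -> T -> R) :
  mixv (fun i p q => \sum_(k : K) H i k p q) =
  \sum_(f : {ffun 'I_N -> K}) mixv (fun i => H i (f i)).
Proof.
rewrite /mixv -mulr_sumr; congr (_ * _).
under eq_bigr do rewrite bigA_distr_bigA mulr_sumr.
by rewrite exchange_big.
Qed.

Definition Lz (W : T -> T -> R) : R :=
  \sum_(s : {perm T}) (-1) ^+ odd_perm s * \prod_(x : T) W x (s x).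

Lemma mix_r1 (W : T -> T -> R) :
  mixv (fun i p q => W (i,false) p * W (i,true) q - W (i,true) p * W (i,false) q)
  = Lz W.
Proof.
pose a i (s : {perm T}) := W (i,false) (s (i,false)) * W (i,true) (s (i,true)).
pose b i (s : {perm T}) := W (i,true) (s (i,false)) * W (i,false) (s (i,true)).
have step : forall k, (k <= N)%N ->
  \sum_(s : {perm T}) (-1) ^+ odd_perm s * \prod_(i : 'I_N) (a i s - b i s) =
  2%:R ^+ k * \sum_(s : {perm T}) (-1) ^+ odd_perm s *
      \prod_(i : 'I_N) (if (i < k)%N then a i s else a i s - b i s).
  elim=> [|k IH] kN.
    by rewrite expr0 mul1r; apply: eq_bigr => s _; congr (_ * _); apply: eq_bigr.
  rewrite IH ?(ltnW kN) // exprSr -mulrA; congr (_ * _).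
  pose j := Ordinal kN.
  pose t := tperm (j,false) (j,true).
  pose Rs (s : {perm T}) := \prod_(i < N | i != j) (if (i < k)%N then a i s else a i s - b i s).
  have ER : forall s, Rs (t * s)%g = Rs s.
    move=> s; apply: eq_bigr => i ij.
    have E : forall c, (t * s)%g (i, c) = s (i, c).
      move=> c; rewrite permM tpermD //.
        by apply/negP => /eqP [] E; rewrite E eqxx in ij.
      by apply/negP => /eqP [] E; rewrite E eqxx in ij.
    by rewrite /a /b !E.
  have Ea : forall s, a j (t * s)%g = b j s.
    by move=> s; rewrite /a /b !permM tpermL tpermR mulrC.
  transitivity (\sum_(s : {perm T}) (-1) ^+ odd_perm s * (a j s - b j s) * Rs s).
    apply: eq_bigr => s _; rewrite (bigD1 j) //= ltnn mulrA; congr (_ * _ * _).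
  transitivity (2%:R * \sum_(s : {perm T}) (-1) ^+ odd_perm s * a j s * Rs s); last first.
    congr (_ * _); apply: eq_bigr => s _; rewrite (bigD1 j) //= ltnSn /a !mulrA; congr (_ * _).
    apply: eq_bigr => i ij.
    have -> : (i < k.+1)%N = (i < k)%N; last by [].
    rewrite ltnS leq_eqVlt.
    have -> : (nat_of_ord i == k) = false; last by [].
    by apply/negP => /eqP E; move: ij; rewrite (_ : i = j) ?eqxx //; apply/val_inj.
  have Hb : \sum_(s : {perm T}) (-1) ^+ odd_perm s * b j s * Rs s =
            - \sum_(s : {perm T}) (-1) ^+ odd_perm s * a j s * Rs s.
    rewrite (reindex_inj (mulgI t)) /= -sumrN; apply: eq_bigr => s _.
    have Eb : b j (t * s)%g = a j s.
      by rewrite /a /b !permM tpermL tpermR mulrC.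
    rewrite Eb ER odd_mul_tperm.
    have -> : ((j, false) != (j, true)) = true by rewrite xpair_eqE eqxx.
    by rewrite /= signrN !mulNr.
  under eq_bigr do rewrite mulrBr mulrBl.
  by rewrite sumrB Hb opprK mulr2n mulrDl mul1r.
rewrite /mixv /Lz.
have -> : \sum_(s : {perm T}) (-1) ^+ odd_perm s *
      \prod_(i < N) (W (i, false) (s (i, false)) * W (i, true) (s (i, true)) -
                 W (i, true) (s (i, false)) * W (i, false) (s (i, true)))
   = \sum_(s : {perm T}) (-1) ^+ odd_perm s * \prod_(i : 'I_N) (a i s - b i s) by [].
rewrite (step N (leqnn N)) mulrA mulVf ?mul1r; last first.
  by rewrite expf_neq0 // pnatr_eq0.
apply: eq_bigr => s _; congr (_ * _).
rewrite (eq_bigr (fun i => \prod_(c : bool) W (i, c) (s (i, c)))).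
  by rewrite pair_big /=; apply: eq_bigr => -[].
by move=> i _; rewrite ltn_ord big_bool /= mulrC.
Qed.

End Mix.

Section Cperm.
Variables (T1 T2 : finType) (f : T1 -> T2) (g : T2 -> T1).
Hypotheses (fK : cancel f g) (gK : cancel g f).

Lemma cperm_inj (s : {perm T1}) : injective (fun x => f (s (g x))).
Proof. move=> x y E; apply: (can_inj gK); apply: (@perm_inj _ s); exact: (can_inj fK). Qed.

Definition cperm (s : {perm T1}) : {perm T2} := perm (@cperm_inj s).

Lemma cpermE s x : cperm s x = f (s (g x)).
Proof. by rewrite permE. Qed.

Lemma cpermM : {morph cperm : s t / (s * t)%g >-> (s * t)%g}.
Proof. by move=> s t; apply/permP => x; rewrite !permM !cpermE fK permM. Qed.

Lemma cperm1 : cperm 1%g = 1%g.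
Proof. by apply/permP => x; rewrite cpermE !perm1 gK. Qed.

Lemma cperm_tperm a b : cperm (tperm a b) = tperm (f a) (f b).
Proof.
apply/permP => x; rewrite cpermE.
case: (tpermP a b (g x)) => [E|E|na nb].
- by rewrite -[x]gK E tpermL.
- by rewrite -[x]gK E tpermR.
rewrite tpermD ?gK //.
  by apply/eqP => E; apply: na; rewrite -E fK.
by apply/eqP => E; apply: nb; rewrite -E fK.
Qed.

Lemma odd_cperm s : odd_perm (cperm s) = odd_perm s.
Proof.
case: (prod_tpermP s) => ts -> dts.
rewrite (big_morph cperm cpermM cperm1).
under eq_bigr do rewrite cperm_tperm.
rewrite -(big_map (fun t => (f t.1, f t.2)) xpredT (fun t => tperm t.1 t.2)).
rewrite !odd_perm_prod ?size_map //.
rewrite all_map; apply: sub_all dts => -[a b] /=.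
by rewrite /dpair /=; apply: contra => /eqP /(can_inj fK) ->.
Qed.

End Cperm.

Section Transfer.
Variable R : comPzRingType.
Variable N : nat.
Local Notation T := ('I_N * bool)%type.

Definition gT (a : 'I_(N + N)) : T :=
  match split a with inl i => (i, false) | inr i => (i, true) end.
Definition hT (x : T) : 'I_(N + N) := unsplit (if x.2 then inr x.1 else inl x.1).

Lemma gTK : cancel gT hT.
Proof. by move=> a; rewrite /gT /hT; case: splitP => i /= E; apply/val_inj; rewrite /= E. Qed.
Lemma hTK : cancel hT gT.
Proof. by move=> [i []]; rewrite /gT /hT unsplitK. Qed.

Lemma Lz_det (W : T -> T -> R) :
  \sum_(s : {perm T}) (-1) ^+ odd_perm s * \prod_(x : T) W x (s x) =
  \det (\matrix_(a, b) W (gT a) (gT b)).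
Proof.
rewrite /determinant.
rewrite (reindex (cperm gTK hTK)); last first.
  by exists (cperm hTK gTK) => s _; apply/permP => x; rewrite !cpermE ?gTK ?hTK.
apply: eq_bigr => s _; rewrite odd_cperm; congr (_ * _).
rewrite (reindex gT); last by exists hT => x _; rewrite ?gTK ?hTK.
by apply: eq_bigr => a _; rewrite mxE cpermE gTK.
Qed.

End Transfer.

Lemma blk_calc (K : comNzRingType) (n : nat) (i : K) (Pc Qc : 'M[K]_n) : i * i = -1 ->
  block_mx 1%:M (- i)%:M 0 1%:M *m block_mx Pc Qc (- Qc) Pc *m block_mx 1%:M i%:M 0 1%:M
  = block_mx (Pc + i *: Qc) 0 (- Qc) (Pc - i *: Qc) :> 'M_(n + n).
Proof.
move=> ii.
rewrite !mulmx_block !mul1mx !mul0mx !mulmx1 !mulmx0.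
rewrite !mul_scalar_mx !mul_mx_scalar !addr0 !add0r.
have e1 : Pc + - i *: - Qc = Pc + i *: Qc by rewrite scaleNr scalerN opprK.
have e2 : i *: (Pc + - i *: - Qc) + (Qc + - i *: Pc) = 0.
  by rewrite e1 scalerDr scalerA ii scaleN1r scaleNr [Qc + _]addrC addrACA subrr addNr addr0.
have e3 : i *: - Qc + Pc = Pc - i *: Qc by rewrite scalerN addrC.
by rewrite e2 e1 e3.
Qed.

Section Cplx.
Variable R : realFieldType.
Local Notation C := R[i].

Definition cc (z : C) : C := let: Complex a b := z in Complex a (- b).

Lemma cc_additive : additive cc.
Proof. by move=> [a b] [c d]; rewrite /cc /=; congr Complex; rewrite opprD. Qed.

Lemma cc_mult : multiplicative cc.
Proof.
split=> [[a b] [c d]|] /=; rewrite /cc /=.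
  by congr Complex; rewrite ?mulrNN ?mulrN ?mulNr ?opprD ?opprK ?oppr0.
by congr Complex; rewrite oppr0.
Qed.

HB.instance Definition _ := GRing.isAdditive.Build C C cc cc_additive.
HB.instance Definition _ := GRing.isMultiplicative.Build C C cc cc_mult.

Local Open Scope complex_scope.

Lemma cc_conj (z : C) : z * cc z = ((let: Complex a b := z in a ^+ 2 + b ^+ 2))%:C.
Proof.
case: z => a b; rewrite /cc -[Complex a b * _]/(Complex _ _) /=.
by congr Complex; rewrite ?expr2; ring.
Qed.

Definition iC : C := Complex 0 1.
Lemma ii : iC * iC = - 1.
Proof. by rewrite -[iC * iC]/(Complex _ _) /=; congr Complex; ring. Qed.

Lemma det_cplx_ge0 (n : nat) (P Q : 'M[R]_n) : 0 <= \det (block_mx P Q (-Q) P).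
Proof.
set M := block_mx _ _ _ _.
pose rc := real_complex R.
pose Pc := map_mx rc P; pose Qc := map_mx rc Q.
pose Z := Pc + iC *: Qc; pose Zb := Pc - iC *: Qc.
have EM : map_mx rc M = block_mx Pc Qc (- Qc) Pc.
  rewrite map_block_mx; congr block_mx.
  by apply/matrixP => x y; rewrite !mxE /rc rmorphN.
have E1 := blk_calc Pc Qc ii.
have E2 : Zb = map_mx cc Z.
  apply/matrixP => x y; rewrite !mxE /rc.
  rewrite -[(P x y)%:C]/(Complex _ _) -[(Q x y)%:C]/(Complex _ _).
  rewrite -[iC * Complex _ _]/(Complex _ _) /=.
  rewrite -[Complex (P x y) 0 + _]/(Complex _ _) /= /cc.
  by congr Complex; ring.
have dL : \det (block_mx 1%:M (- iC)%:M 0 1%:M : 'M[C]_(n + n)) = 1.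
  by rewrite det_ublock !det1 mulr1.
have dR : \det (block_mx 1%:M iC%:M 0 1%:M : 'M[C]_(n + n)) = 1.
  by rewrite det_ublock !det1 mulr1.
have E3 : rc (\det M) = \det Z * cc (\det Z).
  have -> : rc (\det M) = \det (map_mx rc M) by rewrite det_map_mx.
  rewrite EM; have := congr1 determinant E1; rewrite !det_mulmx dL dR mul1r mulr1 => ->.
  by rewrite det_lblock -/Z -/Zb E2 det_map_mx.
move: E3; rewrite cc_conj; case: (\det Z) => a b [->].
by rewrite addr_ge0 // sqr_ge0.
Qed.

End Cplx.

Section Bil.
Variable R : realFieldType.
Variable m : nat.
Implicit Types (A B : 'M[R]_m) (X Y Z : 'rV[R]_m).

Lemma bilDl A X Y Z : bil A (X + Y) Z = bil A X Z + bil A Y Z.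
Proof. by rewrite /bil !mulmxDl mxE. Qed.
Lemma bilZl A a X Z : bil A (a *: X) Z = a * bil A X Z.
Proof. by rewrite /bil -!scalemxAl mxE. Qed.
Lemma bilNl A X Z : bil A (- X) Z = - bil A X Z.
Proof. by rewrite -scaleN1r bilZl mulN1r. Qed.
Lemma bilDr A X Y Z : bil A Z (X + Y) = bil A Z X + bil A Z Y.
Proof. by rewrite /bil raddfD /= !mulmxDr mxE. Qed.
Lemma bilZr A a X Z : bil A Z (a *: X) = a * bil A Z X.
Proof. by rewrite /bil linearZ /= -!scalemxAr mxE. Qed.
Lemma bilNr A X Z : bil A Z (- X) = - bil A Z X.
Proof. by rewrite -scaleN1r bilZr mulN1r. Qed.
Lemma bil_addA A B X Y : bil (A + B) X Y = bil A X Y + bil B X Y.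
Proof. by rewrite /bil mulmxDr mulmxDl mxE. Qed.
Lemma bil_oppA A X Y : bil (- A) X Y = - bil A X Y.
Proof. by rewrite /bil mulmxN mulNmx mxE. Qed.
Lemma bil_scaleA a A X Y : bil (a *: A) X Y = a * bil A X Y.
Proof. by rewrite /bil -scalemxAr -scalemxAl mxE. Qed.
Lemma tr11 (M : 'M[R]_1) : M 0 0 = M^T 0 0.
Proof. by rewrite mxE. Qed.

Lemma bil_skew A X Y : real_2form A -> bil A X Y = - bil A Y X.
Proof.
move=> hA; rewrite /bil tr11 trmx_mul trmx_mul trmxK hA.
by rewrite mulNmx mulmxN mxE mulmxA.
Qed.
Lemma bil_tr A X Y : bil A X Y = bil A^T Y X.
Proof. by rewrite /bil tr11 trmx_mul trmx_mul trmxK mulmxA. Qed.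

Lemma mx11_mul (X : 'M[R]_(1, 1)) (Y : 'M[R]_(1, 1)) : (X *m Y) 0 0 = X 0 0 * Y 0 0.
Proof. by rewrite mxE big_ord1. Qed.

Definition lf (l X : 'rV[R]_m) : R := (X *m l^T) 0 0.
Lemma lfD l X Y : lf l (X + Y) = lf l X + lf l Y.
Proof. by rewrite /lf mulmxDl mxE. Qed.
Lemma lfZ l a X : lf l (a *: X) = a * lf l X.
Proof. by rewrite /lf -scalemxAl mxE. Qed.
Lemma lfN l X : lf l (- X) = - lf l X.
Proof. by rewrite -scaleN1r lfZ mulN1r. Qed.

Lemma bil_rank1 (a b : 'rV[R]_m) X Y :
  bil (a^T *m b) X Y = lf a X * lf Y b.
Proof.
by rewrite /bil /lf mulmxA -mulmxA mx11_mul.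
Qed.

End Bil.

Section Geo.
Variable R : realFieldType.
Variable m : nat.
Variable I : 'M[R]_m.
Hypothesis hI : I *m I = - 1%:M.
Implicit Types (A B : 'M[R]_m) (X Y Z u : 'rV[R]_m).

Lemma XII X : X *m I *m I = - X.
Proof. by rewrite -mulmxA hI mulmxN mulmx1. Qed.

Definition good A := [/\ real_2form A, type11 I A & nonneg11 I A].

Definition mf (l X : 'rV[R]_m) : R := - lf l (X *m I).
Definition mu (l : 'rV[R]_m) : 'rV[R]_m := - (l *m I^T).
Definition R1 (l : 'rV[R]_m) : 'M[R]_m := l^T *m mu l - (mu l)^T *m l.

Lemma dotC (a b : 'rV[R]_m) : (a *m b^T) 0 0 = (b *m a^T) 0 0.
Proof. by rewrite tr11 trmx_mul trmxK. Qed.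

Lemma oppE p q (M : 'M[R]_(p, q)) i j : (- M) i j = - M i j.
Proof. by rewrite mxE. Qed.

Lemma bil_R1 l X Y : bil (R1 l) X Y = lf l X * mf l Y - mf l X * lf l Y.
Proof.
rewrite /R1 bil_addA bil_oppA !bil_rank1 /mf /lf /mu.
rewrite mulNmx raddfN /= mulmxN !oppE (dotC l Y) dotC trmx_mul trmxK mulmxA.
by rewrite -(mulmxA l) -trmx_mul (dotC l (Y *m I)).
Qed.

Lemma R1_skew l : real_2form (R1 l).
Proof. by rewrite /real_2form /R1 linearB /= !trmx_mul !trmxK opprB. Qed.

Lemma lf_XI l X : lf l (X *m I) = - mf l X.
Proof. by rewrite /mf opprK. Qed.

Lemma mf_XI l X : mf l (X *m I) = lf l X.
Proof. by rewrite /mf XII lfN opprK. Qed.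

Lemma R1_type11 l : type11 I (R1 l).
Proof.
move=> X Y; rewrite !bil_R1 !lf_XI !mf_XI; ring.
Qed.

Lemma swapI A X u : good A -> bil A u (X *m I) = bil A X (u *m I).
Proof.
by case=> sk t11 _; rewrite bil_skew // -t11 XII bilNl opprK.
Qed.

Lemma Qexp A X u a b c : good A ->
  bil A (a *: X + b *: u + c *: (u *m I)) ((a *: X + b *: u + c *: (u *m I)) *m I)
  = a ^+ 2 * bil A X (X *m I) + 2%:R * a * (b * bil A X (u *m I) - c * bil A X u)
    + (b ^+ 2 + c ^+ 2) * bil A u (u *m I).
Proof.
move=> gA; have [sk t11 _] := gA.
rewrite !mulmxDl -!scalemxAl XII.
rewrite !(bilDl, bilDr, bilZl, bilZr, bilNr).
rewrite (swapI X u gA) t11 (bil_skew u (u *m I) sk) t11.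
rewrite (bil_skew (u *m I) u sk) (bil_skew u X sk).
have -> : bil A u u = 0.
  by have := bil_skew u u sk => /eqP; rewrite -addr_eq0 -mulr2n mulrn_eq0 /= => /eqP.
ring.
Qed.

Lemma L0 A u : good A -> bil A u (u *m I) = 0 -> forall X, bil A X (u *m I) = 0.
Proof.
move=> gA hu X; have [sk t11 nn] := gA.
apply/eqP/negP => /negP nz.
pose q := bil A X (X *m I); pose L := bil A X (u *m I).
pose b := - (q + 1) / (2%:R * L).
have H := nn (1 *: X + b *: u + 0 *: (u *m I)).
rewrite (Qexp _ _ _ _ _ gA) hu -/q -/L in H.
have E : 1 ^+ 2 * q + 2%:R * 1 * (b * L - 0 * bil A X u) + (b ^+ 2 + 0 ^+ 2) * 0 = -1.
  by rewrite /b; field.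
by move: H; rewrite E ler0N1.
Qed.

Variables (N : nat) (e : 'I_N -> 'rV[R]_m).
Local Notation v := (cframe I e).

Lemma bilA'E A a l X Y :
  bil (A - a *: R1 l) X Y = bil A X Y - a * (lf l X * mf l Y - mf l X * lf l Y).
Proof. by rewrite bil_addA bil_oppA bil_scaleA bil_R1. Qed.

Lemma decomp d : (d <= N)%N -> forall A, good A ->
  (forall p : 'I_N * bool, (d <= p.1)%N -> forall Y, bil A (v p) Y = 0) ->
  exists c : 'I_N -> R, exists l : 'I_N -> 'rV[R]_m,
   [/\ forall k, 0 <= c k, forall k : 'I_N, (d <= k)%N -> c k = 0 &
       forall p q, bil A (v p) (v q) = \sum_k c k * bil (R1 (l k)) (v p) (v q)].
Proof.
elim: d => [|d IH] dN A gA hv.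
  exists (fun _ => 0), (fun _ => 0); split => // p q.
  by rewrite hv // big1 // => k _; rewrite mul0r.
have [sk t11 nn] := gA.
pose j := Ordinal dN; pose ee := e j.
pose h := bil A ee (ee *m I).
pose lam := (A *m (ee *m I)^T)^T.
have lfl X : lf lam X = bil A X (ee *m I) by rewrite /lf trmxK mulmxA.
have mfl X : mf lam X = - bil A X ee by rewrite /mf lfl t11.
have h0 : 0 <= h by apply: nn.
pose A' := A - h^-1 *: R1 lam.
have gA' : good A'.
  split.
  - rewrite /real_2form /A' linearB /= linearZ /= R1_skew sk.
    by rewrite scalerN opprB opprK addrC.
  - by move=> X Y; rewrite /A' !bil_addA !bil_oppA !bil_scaleA R1_type11 t11.
  - move=> X; rewrite /A' bilA'E mf_XI lf_XI.
    have [hz|hnz] := eqVneq h 0.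
      by rewrite hz invr0 mul0r subr0; apply: nn.
    have hp : 0 < h by rewrite lt_def hnz h0.
    have key := nn (h *: X + (- lf lam X) *: ee + (- mf lam X) *: (ee *m I)).
    rewrite (Qexp _ _ _ _ _ gA) -/h in key.
    have E : h ^+ 2 * bil A X (X *m I) + 2%:R * h * (- lf lam X * bil A X (ee *m I)
       - - mf lam X * bil A X ee) + (( - lf lam X) ^+ 2 + (- mf lam X) ^+ 2) * h
       = h * (h * bil A X (X *m I) - (lf lam X ^+ 2 + mf lam X ^+ 2)).
      rewrite -lfl; have -> : bil A X ee = - mf lam X by rewrite mfl opprK.
      ring.
    rewrite E pmulr_rge0 // in key.
    have -> : bil A X (X *m I) - h^-1 * (lf lam X * lf lam X - mf lam X * - mf lam X)
      = h^-1 * (h * bil A X (X *m I) - (lf lam X ^+ 2 + mf lam X ^+ 2)).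
      by field.
    by rewrite mulr_ge0 // invr_ge0.
have van : forall p : 'I_N * bool, (d <= p.1)%N -> forall Y, bil A' (v p) Y = 0.
  move=> [i b] /= di Y; rewrite /A' bilA'E.
  case: (ltnP d i) => [lt|le].
    have z1 : forall c, bil A (v (i, c)) Y = 0 by move=> c; apply: hv.
    have z2 : forall c, lf lam (v (i, c)) = 0 by move=> c; rewrite lfl hv.
    have z3 : forall c, mf lam (v (i, c)) = 0.
      by move=> c; rewrite mfl hv // oppr0.
    by rewrite z1 z2 z3 !mul0r subrr mulr0 subr0.
  have ij : i = j by apply/val_inj; apply/eqP; rewrite eqn_leq le di.
  rewrite ij.
  have [hz|hnz] := eqVneq h 0.
    have H1 := L0 gA hz.
    have hz' : bil A (ee *m I) (ee *m I *m I) = 0.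
      by rewrite XII bilNr bil_skew // opprK.
    have H2 := L0 gA hz'.
    rewrite hz invr0 mul0r subr0.
    case: b; rewrite /cframe /= -/ee.
      by rewrite bil_skew // H1 oppr0.
    by rewrite bil_skew //; have := H2 Y; rewrite XII bilNr => /eqP; rewrite oppr_eq0 => /eqP ->; rewrite oppr0.
  case: b; rewrite /cframe /= -/ee.
    have -> : lf lam (ee *m I) = 0.
      rewrite lfl t11; have := bil_skew ee ee sk => /eqP.
      by rewrite -addr_eq0 -mulr2n mulrn_eq0 /= => /eqP.
    have -> : mf lam (ee *m I) = h by rewrite /mf XII lfN opprK lfl.
    rewrite lfl (bil_skew Y) //; field; exact: hnz.
  have -> : lf lam ee = h by rewrite lfl.
  have -> : mf lam ee = 0.
    rewrite mfl; have := bil_skew ee ee sk => /eqP.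
    by rewrite -addr_eq0 -mulr2n mulrn_eq0 /= => /eqP ->; rewrite oppr0.
  rewrite mfl (bil_skew Y) //; field; exact: hnz.
have [c' [l' [c'0 c'd c'sum]]] := IH (ltnW dN) A' gA' van.
exists (fun k => if k == j then h^-1 else c' k), (fun k => if k == j then lam else l' k).
split.
- by move=> k; case: eqP => _ //; rewrite invr_ge0.
- move=> k dk; case: eqP => [kj|_]; last by apply: c'd; apply: ltnW.
  by move: dk; rewrite kj /= ltnn.
move=> p q.
rewrite (bigD1 j) //= eqxx.
rewrite (eq_bigr (fun k => c' k * bil (R1 (l' k)) (v p) (v q))); last first.
  by move=> k /negPf ->.
have : bil A' (v p) (v q) = bil A (v p) (v q) - h^-1 * bil (R1 lam) (v p) (v q).
  by rewrite /A' bil_addA bil_oppA bil_scaleA.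
rewrite c'sum (bigD1 j) //= c'd // mul0r add0r => ->.
by rewrite addrC subrK.
Qed.
End Geo.

Section Final.
Variable R : realFieldType.
Variable N : nat.
Local Notation T := ('I_N * bool)%type.

Lemma mixv_ext (G G' : 'I_N -> T -> T -> R) :
  (forall i p q, G i p q = G' i p q) -> mixv G = mixv G'.
Proof.
move=> E; rewrite /mixv; congr (_ * _); apply: eq_bigr => s _; congr (_ * _).
by apply: eq_bigr => i _; rewrite E.
Qed.

Lemma mix_scale (c : 'I_N -> R) (G : 'I_N -> T -> T -> R) :
  mixv (fun i p q => c i * G i p q) = (\prod_i c i) * mixv G.
Proof.
rewrite /mixv mulrCA; congr (_ * _); rewrite mulr_sumr; apply: eq_bigr => s _.
by rewrite big_split /= mulrCA.
Qed.

Variable m : nat.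
Variable I : 'M[R]_m.
Hypothesis hI : I *m I = - 1%:M.
Variable e : 'I_N -> 'rV[R]_m.
Local Notation v := (cframe I e).

Lemma blk_eq (l : 'I_N -> 'rV[R]_m) :
  \matrix_(a, b) (fun x y : T => if x.2 then mf I (l x.1) (v y) else lf (l x.1) (v y))
      (gT a) (gT b)
  = block_mx (\matrix_(i, j) lf (l i) (e j)) (\matrix_(i, j) lf (l i) (e j *m I))
             (- \matrix_(i, j) lf (l i) (e j *m I)) (\matrix_(i, j) lf (l i) (e j)).
Proof.
apply/matrixP => a b; rewrite /block_mx !mxE /gT.
case: (split a) => i; rewrite !mxE; case: (split b) => j; rewrite !mxE /cframe /=;
  [by []|by []|by rewrite /mf|by rewrite mf_XI].
Qed.

Lemma mix_pos (Bs : 'I_N -> 'M[R]_m) : (forall i, good I (Bs i)) ->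
  0 <= mixv (fun i p q => bil (Bs i) (v p) (v q)).
Proof.
move=> gB.
have H : forall i, exists cl : ('I_N -> R) * ('I_N -> 'rV[R]_m),
   (forall k, 0 <= cl.1 k) /\ forall p q, bil (Bs i) (v p) (v q) =
      \sum_k cl.1 k * bil (R1 I (cl.2 k)) (v p) (v q).
  move=> i.
  have vac : forall p : T, (N <= p.1)%N -> forall Y, bil (Bs i) (v p) Y = 0.
    by move=> p; rewrite leqNgt ltn_ord.
  have [c [l [c0 _ cs]]] := decomp hI (e := e) (leqnn N) (gB i) vac.
  by exists (c, l).
have [f hf] := fin_all_exists H.
rewrite (mixv_ext (G' := fun i p q => \sum_k (f i).1 k * bil (R1 I ((f i).2 k)) (v p) (v q))); last first.
  by move=> i p q; rewrite (proj2 (hf i)).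
rewrite mix_sum; apply: sumr_ge0 => kap _.
rewrite mix_scale; apply: mulr_ge0.
  by apply: prodr_ge0 => i _; apply: (proj1 (hf i)).
pose l := fun i => (f i).2 (kap i).
rewrite (mixv_ext (G' := fun i p q =>
   (fun x y : T => if x.2 then mf I (l x.1) (v y) else lf (l x.1) (v y)) (i, false) p *
   (fun x y : T => if x.2 then mf I (l x.1) (v y) else lf (l x.1) (v y)) (i, true) q -
   (fun x y : T => if x.2 then mf I (l x.1) (v y) else lf (l x.1) (v y)) (i, true) p *
   (fun x y : T => if x.2 then mf I (l x.1) (v y) else lf (l x.1) (v y)) (i, false) q)); last first.
  by move=> i p q /=; rewrite bil_R1.
rewrite (mix_r1 (fun x y : T => if x.2 then mf I (l x.1) (v y) else lf (l x.1) (v y))).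
rewrite /Lz (Lz_det (fun x y : T => if x.2 then mf I (l x.1) (v y) else lf (l x.1) (v y))) (blk_eq l).
exact: det_cplx_ge0.
Qed.

End Final.

Section HC.
Variable R : realFieldType.
Variable m : nat.
Variables I J K A : 'M[R]_m.

Lemma bilJ X Y : bil (Jpull J A) X Y = bil A (X *m J) (Y *m J).
Proof. by rewrite /bil /Jpull trmx_mul !mulmxA. Qed.

Lemma goodJ : hypercomplex I J K -> good I A -> good I (- Jpull J A).
Proof.
case=> hI hJ hK hIJK [sk t11 nn].
have hIJ : I *m J = K.
  have := congr1 (mulmx^~ K) hIJK; rewrite -mulmxA hK mulmxN mulmx1 mulNmx mul1mx.
  by move/oppr_inj.
have h2 : J *m I *m J = I.
  have := congr1 (mulmx I) (etrans (congr1 (fun M => M *m M) hIJ) hK).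
  rewrite /= !mulmxA hI mulmxN mulmx1 !mulNmx mul1mx.
  by move/oppr_inj.
have h3 : I *m J = - (J *m I).
  have := congr1 (mulmx^~ J) h2; rewrite -mulmxA hJ mulmxN mulmx1 => <-.
  by [].
have XIJ X : X *m I *m J = - (X *m J *m I).
  by rewrite -mulmxA h3 mulmxN mulmxA.
split.
- rewrite /real_2form /Jpull raddfN /= !trmx_mul trmxK sk.
  by rewrite mulNmx mulmxN !mulmxA.
- by move=> X Y; rewrite !bil_oppA !bilJ !XIJ bilNl bilNr opprK t11.
- move=> X; rewrite bil_oppA bilJ XIJ bilNr opprK; exact: nn.
Qed.

End HC.

Theorem lemma3p1 (R : realFieldType) (n : nat) (I J K A : 'M[R]_(4 * n)) :
  hypercomplex I J K -> real_2form A -> type11 I A -> nonneg11 I A ->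
  forall e : 'I_(2 * n) -> 'rV[R]_(4 * n),
    lin_indep (cframe I e) ->
    wedge_pow A (cframe I e)
      <= wedge_pow (A - Jpull J A) (cframe I e).
Proof.
move=> hc sk t11 nn e _.
have hI : I *m I = - 1%:M by case: hc.
have gA : good I A by split.
have gA' := goodJ hc gA.
pose A' := - Jpull J A.
have -> : wedge_pow A (cframe I e) = mixv (fun _ p q => bil A (cframe I e p) (cframe I e q)) by [].
have -> : wedge_pow (A - Jpull J A) (cframe I e) =
   mixv (fun _ p q => \sum_(k : bool) bil (if k then A' else A) (cframe I e p) (cframe I e q)).
  rewrite (_ : wedge_pow _ _ = mixv (fun _ p q => bil (A - Jpull J A) (cframe I e p) (cframe I e q))) //.
  by apply: mixv_ext => i p q; rewrite big_bool /= bil_addA addrC.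
rewrite mix_sum (bigD1 [ffun=> false]) //=.
rewrite (mixv_ext (G' := fun _ p q => bil A (cframe I e p) (cframe I e q))); last first.
  by move=> i p q; rewrite ffunE.
rewrite lerDl; apply: sumr_ge0 => f _.
apply: (mix_pos hI) => i.
by case: (f i).
Qed.
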